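(* For any positive integers $a,b,n$, in $\mathfrak{h}^1_t$, $$\sum_{m=1}^nd_m(t)\,z_{b+(m-1)a}\ast_t z_a^{n-m}=\sum_{m=0}^{n-1}z_a^mz_bz_a^{n-1-m}.$$
   Context: $d_m(t)=t^m-(t-1)^m$. $\mathfrak{h}_t=\mathbb{Q}[t]\langle x,y\rangle$ ($1$ = empty word), $\mathfrak{h}^1_t=\mathbb{Q}[t]+\mathfrak{h}_ty$, $z_k=x^{k-1}y$, and $z_a^j$ is the concatenation power. For a word $w$, $\delta(w)=1$ if $w=1$, else $0$. The $t$-harmonic product $\ast_t$ on $\mathfrak{h}^1_t$ is the $\mathbb{Q}[t]$-bilinear product with $1\ast_t w=w\ast_t1=w$ and, for words $w_1,w_2\in\mathfrak{h}^1_t$ and $k,l\ge1$, $z_kw_1\ast_t z_lw_2=z_k(w_1\ast_t z_lw_2)+z_l(z_kw_1\ast_t w_2)+(1-2t)z_{k+l}(w_1\ast_t w_2)+[1-\delta(w_1)\delta(w_2)](t^2-t)x^{k+l}(w_1\ast_t w_2)$. *)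

(* Defs.v *)
From mathcomp Require Import all_boot all_order all_algebra.
Set Implicit Arguments. Unset Strict Implicit. Unset Printing Implicit Defensive.
Import Order.TTheory GRing.Theory Num.Theory.
Local Open Scope ring_scope.

(* Words over the alphabet {x, y}: x = false, y = true.
   An element of h_t = Q[t]<x,y> is represented by its coefficient function
   (word -> Q[t]); we only ever build finitely supported ones. *)
Definition word := seq bool.
Definition hpoly := word -> {poly rat}.

Definition zk (k : nat) : word := rcons (nseq k.-1 false) true.

Definition zword (s : seq nat) : word := flatten (map zk s).

Definition wind (u : word) : hpoly := fun w => if w == u then 1 else 0.

Definition lmul (u : word) (f : hpoly) : hpoly :=
  fun w => if take (size u) w == u then f (drop (size u) w) else 0.

Definition dpoly (m : nat) : {poly rat} := 'X ^+ m - ('X - 1) ^+ m.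

(* t-harmonic product of the h^1 words z_{s1} and z_{s2} (given by their
   index sequences, all indices >= 1), with fuel. *)
Fixpoint hprod_fuel (fuel : nat) (s1 s2 : seq nat) : hpoly :=
  match fuel with
  | 0 => fun _ => 0
  | f.+1 =>
    match s1, s2 with
    | [::], _ => wind (zword s2)
    | _, [::] => wind (zword s1)
    | k :: w1, l :: w2 => fun w =>
        lmul (zk k) (hprod_fuel f w1 s2) w
      + lmul (zk l) (hprod_fuel f s1 w2) w
      + (1 - 2%:R *: 'X) * lmul (zk (k + l)) (hprod_fuel f w1 w2) w
      + (if (w1 == [::]) && (w2 == [::]) then 0 else 'X ^+ 2 - 'X)
          * lmul (nseq (k + l) false) (hprod_fuel f w1 w2) w
    end
  end.

Definition hprod (s1 s2 : seq nat) : hpoly :=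
  hprod_fuel (size s1 + size s2).+1 s1 s2.

(* Main.v *)
Require Import Defs.
From mathcomp Require Import all_boot all_order all_algebra.
From mathcomp Require Import ring zify.
Import GRing.Theory.
Local Open Scope ring_scope.

Definition T (a k j : nat) : hpoly := wind (zword (k :: nseq j a)).

Lemma lmul_wind u v w : lmul u (wind v) w = wind (u ++ v) w.
Proof.
rewrite /lmul /wind; case: (eqVneq w (u ++ v)) => [->|ne].
  by rewrite take_size_cat // drop_size_cat // !eqxx.
case: eqP => // ht; case: eqP => // hd.
by rewrite -(cat_take_drop (size u) w) ht hd eqxx in ne.
Qed.

Lemma lmul_ext u (f g : hpoly) w : (forall x, f x = g x) -> lmul u f w = lmul u g w.
Proof. by rewrite /lmul => h; rewrite h. Qed.

Lemma lmul_sum u (I : Type) (r : seq I) (P : pred I) (F : I -> hpoly) w :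
  lmul u (fun x => \sum_(i <- r | P i) F i x) w = \sum_(i <- r | P i) lmul u (F i) w.
Proof. by rewrite /lmul; case: ifP => _ //; rewrite big1. Qed.

Lemma lmul_scale u c (f : hpoly) w : lmul u (fun x => c * f x) w = c * lmul u f w.
Proof. by rewrite /lmul; case: ifP => _ //; rewrite mulr0. Qed.

Lemma hpf_cons f k w1 l w2 : hprod_fuel f.+1 (k :: w1) (l :: w2) =
  fun w => lmul (zk k) (hprod_fuel f w1 (l :: w2)) w
      + lmul (zk l) (hprod_fuel f (k :: w1) w2) w
      + (1 - 2%:R *: 'X) * lmul (zk (k + l)) (hprod_fuel f w1 w2) w
      + (if (w1 == [::]) && (w2 == [::]) then 0 else 'X ^+ 2 - 'X)
          * lmul (nseq (k + l) false) (hprod_fuel f w1 w2) w.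
Proof. by []. Qed.

Lemma hpf_nil f s : hprod_fuel f.+1 [::] s = wind (zword s).
Proof. by []. Qed.

Lemma Qfuel a k j f : (j <= f)%N ->
  hprod_fuel f.+1 [:: k] (nseq j a) = hprod_fuel j.+1 [:: k] (nseq j a).
Proof.
elim: j f => [|j IH] [|f] // hf.
rewrite [nseq j.+1 a]/= !hpf_cons.
by rewrite !hpf_nil IH.
Qed.

Lemma Qrec a k j w : (0 < a)%N ->
  hprod [:: k] (nseq j.+1 a) w =
  T a k j.+1 w + lmul (zk a) (hprod [:: k] (nseq j a)) w
  + (1 - 2%:R *: 'X) * T a (k + a) j w
  + (if j is j'.+1 then ('X ^+ 2 - 'X) * T a (k + a + a) j' w else 0).
Proof.
move=> ha.
rewrite /hprod !size_nseq (_ : (size [:: k] + j.+1).+1 = j.+3) // (_ : (size [:: k] + j).+1 = j.+2) //.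
rewrite [nseq j.+1 a]/= hpf_cons !hpf_nil.
rewrite !lmul_wind.
case: j => [|j] /=; first by rewrite mul0r.
congr (_ + _ + _ + _); congr (_ * _).
rewrite /T /wind /zword /= catA; congr (if _ == _ ++ _ then _ else _).
rewrite /zk; case: a ha => // a' _.
rewrite -rcons_cat -nseqD /=; congr (rcons (nseq _ _) _); lia.
Qed.

Lemma dpoly0 : dpoly 0 = 0.
Proof. by rewrite /dpoly !expr0 subrr. Qed.

Lemma dpoly1 : dpoly 1 = 1.
Proof. rewrite /dpoly !expr1; ring. Qed.

Lemma dpoly_rec i : dpoly i.+2 + (1 - 2%:R *: 'X) * dpoly i.+1 + ('X ^+ 2 - 'X) * dpoly i = 0.
Proof. rewrite /dpoly scaler_nat !exprS; ring. Qed.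

Definition Lf a b n : hpoly := fun w =>
  \sum_(0 <= i < n) dpoly i.+1 * hprod [:: (b + i * a)%N] (nseq (n - i.+1) a) w.

Definition Rf a b n : hpoly := fun w =>
  \sum_(0 <= m < n) wind (zword (nseq m a ++ b :: nseq (n - 1 - m) a)) w.

Lemma Rrec a b n w : Rf a b n.+1 w = T a b n w + lmul (zk a) (Rf a b n) w.
Proof.
rewrite /Rf big_nat_recl // lmul_sum subn1 subn0 /=; congr (_ + _).
apply: eq_bigr => m _; rewrite lmul_wind; congr (wind _ w).
rewrite /zword /=; congr (_ ++ flatten (map zk (_ ++ _ :: nseq _ a))); lia.
Qed.

Lemma Lrec a b n w : (0 < a)%N -> Lf a b n.+1 w = T a b n w + lmul (zk a) (Lf a b n) w.
Proof.
move=> ha.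
rewrite /Lf big_nat_recr //= subnn.
have hlast : hprod [:: (b + n * a)%N] [::] w = T a (b + n * a) 0 w by [].
rewrite hlast.
rewrite (eq_big_nat _ _ (F2 := fun i => dpoly i.+1 * T a (b + i * a) (n - i) w
   + dpoly i.+1 * lmul (zk a) (hprod [:: (b + i * a)%N] (nseq (n - i.+1) a)) w
   + dpoly i.+1 * ((1 - 2%:R *: 'X) * T a (b + i.+1 * a) (n - i.+1) w)
   + dpoly i.+1 * (if (n - i.+1)%N is j'.+1 then ('X ^+ 2 - 'X) * T a (b + i.+2 * a) j' w else 0))); last first.
  move=> i /andP[_ hi].
  have e1 : (b + i * a + a = b + i.+1 * a)%N by rewrite mulSnr addnA.
  have e2 : (b + i.+1 * a + a = b + i.+2 * a)%N by rewrite (mulSnr i.+1) addnA.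
  rewrite subSS -(subnSK hi) Qrec // (subnSK hi) e1 e2 -!mulrDr.
  by case: (n - i.+1)%N.
rewrite !big_split /=.
rewrite (lmul_sum _ _ _ _ (fun i x => dpoly i.+1 * hprod [:: (b + i * a)%N] (nseq (n - i.+1) a) x)).
under [X in _ = _ + X]eq_bigr do rewrite lmul_scale.
have E : forall x1 x2 x3 x4 x5 y : {poly rat}, x1 + x5 + x3 + x4 = y -> x1 + x2 + x3 + x4 + x5 = y + x2.
  by move=> x1 x2 x3 x4 x5 y <-; ring.
apply: E.
have hA : \sum_(0 <= i < n) dpoly i.+1 * T a (b + i * a) (n - i) w
   + dpoly n.+1 * T a (b + n * a) 0 w
   = \sum_(0 <= i < n.+1) dpoly i.+1 * T a (b + i * a) (n - i) w.
  by rewrite big_nat_recr //= subnn.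
have hB : \sum_(0 <= i < n) dpoly i.+1 * ((1 - 2%:R *: 'X) * T a (b + i.+1 * a) (n - i.+1) w)
   = \sum_(0 <= i < n.+1) dpoly i * ((1 - 2%:R *: 'X) * T a (b + i * a) (n - i) w).
  by rewrite big_nat_recl // dpoly0 mul0r add0r.
have hC : \sum_(0 <= i < n) dpoly i.+1 * (if (n - i.+1)%N is j'.+1 then ('X ^+ 2 - 'X) * T a (b + i.+2 * a) j' w else 0)
   = \sum_(0 <= i < n.+1) dpoly i.-1 * (('X ^+ 2 - 'X) * T a (b + i * a) (n - i) w).
  clear hlast; case: n {hA hB} => [|n].
    by rewrite big_geq // big_nat1 dpoly0 mul0r.
  rewrite big_nat_recr //= subnn mulr0 addr0.
  rewrite 2?big_nat_recl // /= dpoly0 !mul0r !add0r.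
  apply: eq_big_nat => i /andP[_ hi].
  by rewrite subSS -(subnSK hi) /=.
rewrite hA hB hC -!big_split /=.
rewrite big_nat_recl // dpoly1 dpoly0 mul0n addn0 subn0 mul1r !mul0r !addr0.
rewrite big1 ?addr0 // => i _.
rewrite /= !mulrA -!mulrDl [dpoly i.+1 * _]mulrC [dpoly i * _]mulrC dpoly_rec.
by rewrite mul0r.
Qed.

Lemma LR a b n w : (0 < a)%N -> Lf a b n w = Rf a b n w.
Proof.
move=> ha; elim: n w => [|n IH] w.
  by rewrite /Lf /Rf !big_geq.
by rewrite Lrec // Rrec // (lmul_ext _ _ _ _ IH).
Qed.

Theorem lemma4p1 (a b n : nat) (ha : (0 < a)%N) (hb : (0 < b)%N) (hn : (0 < n)%N)
  (w : word) :
  \sum_(1 <= m < n.+1)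
      dpoly m * hprod [:: (b + (m - 1) * a)%N] (nseq (n - m) a) w
  = \sum_(0 <= m < n) wind (zword (nseq m a ++ b :: nseq (n - 1 - m) a)) w.
Proof.
have := @LR a b n w ha; rewrite /Lf /Rf => <-.
rewrite -{1}(add0n 1%N) big_addn subn1 /=.
apply: eq_bigr => i _.
by rewrite addn1 subn1.
Qed.
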